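(* Consider integers $0=z_0\le z_1\le\cdots\le z_k\le z_{k+1}=k$ with $z_i\ge i-1$ for all $i\in\{1,\dots,k\}$. Let $\mathbf{a}=(a_1,\dots,a_k)\in\mathbb{N}^k$ with $a_1\cdots a_k$ squarefree. Then $$L^{(k+1)}(\mathbf{a})\le\sum_{\substack{d_j\mid a_j\\1\le j\le k}}\left(\prod_{j=1}^k(z_j-j+1)^{\omega(d_j)}\right)\min\left\{\prod_{j=0}^k\log^{z_{j+1}-z_j}(2a_1\cdots a_j),\ (\log2)^k\prod_{j=1}^k(k-z_j+1)^{\omega(a_j/d_j)}\right\},$$ with the convention $0^0=1$ (and the empty product $a_1\cdots a_0=1$).
   Context: For $\mathbf{a}\in\mathbb{N}^k$, $L^{(k+1)}(\mathbf{a})$ is the $k$-dimensional Lebesgue measure of $\bigcup[\log(d_1/2),\log d_1)\times\cdots\times[\log(d_k/2),\log d_k)$ over all $(d_1,\dots,d_k)\in\mathbb{N}^k$ with $d_1\cdots d_i\mid a_1\cdots a_i$ for $1\le i\le k$. $\omega(n)$ is the number of distinct prime factors of $n$. *)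

(* Defs.v *)
From HB Require Import structures.
From mathcomp Require Import all_boot all_order all_algebra.
From mathcomp Require Import all_classical all_reals all_analysis.
Set Implicit Arguments. Unset Strict Implicit. Unset Printing Implicit Defensive.
Import Order.TTheory GRing.Theory Num.Theory.
Local Open Scope classical_set_scope.
Local Open Scope ring_scope.

Definition squarefree (n : nat) : bool :=
  (0 < n)%N && all (fun p => logn p n <= 1)%N (primes n).

Definition omega (n : nat) : nat := size (primes n).

(* Iterated Lebesgue integral over R^n (points as sequences of length n,
   first coordinate integrated outermost).  By Tonelli, for a Borel set A
   of R^n, iter_leb n (indicator of A) is the n-dimensional Lebesgue
   measure of A. *)
Fixpoint iter_leb {R : realType} (n : nat) (f : seq R -> \bar R) : \bar R :=
  match n with
  | 0 => f [::]
  | n'.+1 => (\int[@lebesgue_measure R]_x iter_leb n' (fun t => f (x :: t)))%E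
  end.

Definition Lset {R : realType} (k : nat) (a : 'I_k -> nat) : set (seq R) :=
  [set x | exists d : 'I_k -> nat,
     (forall i : 'I_k, (0 < d i)%N) /\
     (forall i : 'I_k,
        (\prod_(j < k | (j <= i)%N) d j %| \prod_(j < k | (j <= i)%N) a j)%N) /\
     (forall i : 'I_k,
        ln ((d i)%:R / 2) <= nth 0 x i /\ nth 0 x i < ln (d i)%:R)].

Definition Lk {R : realType} (k : nat) (a : 'I_k -> nat) : \bar R :=
  iter_leb k (fun x => ((\1_(@Lset R k a) x : R)%:E)).

Arguments Lset {R} k a.
Arguments Lk {R} k a.

(* Main.v *)
Require Import Defs.
From HB Require Import structures.
From mathcomp Require Import all_boot all_order all_algebra.
From mathcomp Require Import all_classical all_reals all_analysis.
From mathcomp Require Import zify.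
Import Order.TTheory GRing.Theory Num.Theory.
Set Implicit Arguments. Unset Strict Implicit. Unset Printing Implicit Defensive.


Definition sqf n := 0 < n /\ forall p, logn p n <= 1.

Lemma sqf_dvd m n : m %| n -> sqf n -> sqf m.
Proof.
move=> mn [n0 hn]; split; first exact: dvdn_gt0 n0 mn.
by move=> p; apply: leq_trans (hn p); apply: dvdn_leq_log.
Qed.

Lemma sqf_prod n : sqf n -> n = \prod_(p <- primes n) p.
Proof.
move=> [n0 hn]; rewrite {1}(prod_prime_decomp n0) prime_decompE big_map /=.
apply: eq_big_seq => p pin /=.
have : 0 < logn p n by rewrite logn_gt0.
by have := hn p; case: (logn p n) => [|[|]] //= _ _; rewrite expn1.
Qed.

Lemma sqf_coprime m n : sqf (m * n) -> coprime m n.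
Proof.
move=> [mn0 hmn]; have m0 : 0 < m by move: mn0; rewrite muln_gt0 => /andP[].
have n0 : 0 < n by move: mn0; rewrite muln_gt0 => /andP[].
rewrite coprime_has_primes //; apply/hasPn => p pn; apply/negP => pm.
have := hmn p; rewrite lognM //.
have : 0 < logn p m by rewrite logn_gt0.
have : 0 < logn p n by rewrite logn_gt0.
by case: (logn p m) => // a; case: (logn p n) => // b; rewrite addnS.
Qed.

Lemma prod_gt0s (I : eqType) (s : seq I) (P : pred I) (F : I -> nat) :
  (forall i, i \in s -> P i -> 0 < F i) -> 0 < \prod_(i <- s | P i) F i.
Proof.
move=> h; rewrite big_seq_cond; apply: (big_ind (fun x => 0 < x)) => //.
  by move=> x y x0 y0; rewrite muln_gt0 x0 y0.
by move=> i /andP[]; apply: h.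
Qed.

Lemma primes_prod (s : seq nat) : sorted ltn s -> all prime s ->
  primes (\prod_(p <- s) p) = s.
Proof.
move=> ss ps; apply: (irr_sorted_eq ltn_trans ltnn (sorted_primes _) ss) => q.
have s0 : 0 < \prod_(p <- s) p.
  by apply: prod_gt0s => i /(allP ps) /prime_gt0 ->.
rewrite mem_primes s0 /=; apply/andP/idP => [[pq]|qs].
  rewrite Euclid_dvd_prod // big_has => /hasP [p ps' qp].
  by move: qp; rewrite dvdn_prime2 //; [move/eqP->|apply: (allP ps)].
split; first exact: (allP ps).
by rewrite Euclid_dvd_prod ?(allP ps) // big_has; apply/hasP; exists q.
Qed.

Lemma primes_prod_filter (P : pred nat) n :
  primes (\prod_(p <- primes n | P p) p) = seq.filter P (primes n).
Proof.
rewrite -big_filter primes_prod //; first by apply: sorted_filter; [exact: ltn_trans|exact: sorted_primes].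
by apply/allP => p; rewrite mem_filter mem_primes => /andP[_ /andP[]].
Qed.

Lemma perm_primesM m n : coprime m n -> 0 < m -> 0 < n ->
  perm_eq (primes (m * n)) (primes m ++ primes n).
Proof.
move=> cmn m0 n0; apply: uniq_perm.
- exact: primes_uniq.
- rewrite cat_uniq !primes_uniq /=.
  by move: cmn; rewrite coprime_has_primes // andbT.
by move=> p; rewrite primesM // mem_cat.
Qed.

Lemma prod_split (I : Type) (s : seq I) (f : I -> nat) (P : pred nat) :
  sqf (\prod_(j <- s) f j) ->
  \prod_(j <- s) \prod_(p <- primes (f j) | P p) p =
  \prod_(p <- primes (\prod_(j <- s) f j) | P p) p.
Proof.
elim: s => [|h t IH]; first by rewrite !big_nil.
rewrite !big_cons => hs.
have c := sqf_coprime hs.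
have [h0 t0] : 0 < f h /\ 0 < \prod_(j <- t) f j.
  by case: hs => /[!muln_gt0] /andP[]; split.
rewrite IH; last exact: sqf_dvd (dvdn_mull _ (dvdnn _)) hs.
by rewrite (perm_big _ (perm_primesM c h0 t0)) big_cat.
Qed.


Lemma prod_sub_dvd (I : finType) (P : pred I) (F : I -> nat) :
  \prod_(i | P i) F i %| \prod_i F i.
Proof. by rewrite [X in _ %| X](bigID P) /=; exact: dvdn_mulr. Qed.

Lemma prod_two_dvd (I : finType) (P : pred I) (F : I -> nat) j j' :
  j != j' -> P j -> P j' -> F j * F j' %| \prod_(i | P i) F i.
Proof.
move=> jj' Pj Pj'; rewrite (bigD1 j) //= (bigD1 j') /=; last by rewrite Pj' eq_sym.
by rewrite mulnA; apply: dvdn_mulr.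
Qed.

Lemma sqf_pp n p : sqf n -> prime p -> p * p %| n -> False.
Proof.
move=> [n0 hn] pp ppn; have := dvdn_leq_log p n0 ppn.
have -> : p * p = p ^ 2 by rewrite expnS expn1.
rewrite pfactorK // => h.
by have := leq_trans h (hn p).
Qed.

Lemma big_seq_sub_nat (s : seq nat) (Q : pred nat) (F : nat -> nat) : uniq s ->
  \prod_(y : seq_sub s | Q (val y)) F (val y) = \prod_(p <- s | Q p) F p.
Proof.
move=> us; transitivity (\prod_(p <- map val (enum [set: seq_sub s]%SET) | Q p) F p).
  by rewrite big_map big_enum_cond /=; apply: eq_bigl => y; rewrite finset.in_setT.
apply: perm_big; apply: uniq_perm => //.
  by rewrite map_inj_uniq ?enum_uniq //; exact: val_inj.
move=> p; apply/mapP/idP => [[y _ ->]|ps]; first exact: valP.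
by exists (SeqSub ps); rewrite ?mem_enum ?finset.in_setT.
Qed.

Section Witness.
Variables (k : nat) (a : 'I_k -> nat) (z : nat -> nat) (d : 'I_k -> nat).
Hypothesis hA : sqf (\prod_(i < k) a i).
Hypothesis hd0 : forall i, 0 < d i.
Hypothesis hdiv : forall i : 'I_k,
  \prod_(j < k | (j <= i)%N) d j %| \prod_(j < k | (j <= i)%N) a j.

Local Notation A := (\prod_(i < k) a i).

Definition pos (p : nat) : nat :=
  if [pick i : 'I_k | p %| d i] is Some i then nat_of_ord i else k.

Lemma pos_le p : pos p <= k.
Proof. by rewrite /pos; case: pickP => // i _; exact: ltnW. Qed.

Lemma a_dvd j : a j %| A.
Proof. by rewrite (bigD1 j) //=; exact: dvdn_mulr. Qed.

Lemma d_dvd i : d i %| A.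
Proof.
apply: (dvdn_trans _ (dvdn_trans (hdiv i) (prod_sub_dvd _ _))).
by rewrite (bigD1 i) //=; exact: dvdn_mulr.
Qed.

Lemma uniq_a p j j' : prime p -> p %| a j -> p %| a j' -> j = j'.
Proof.
move=> pp pj pj'; apply/eqP; apply/negPn/negP => jj'.
apply: (sqf_pp hA pp); have h := @prod_two_dvd _ xpredT a j j' jj' isT isT.
apply: (dvdn_trans _ h).
exact: dvdn_mul.
Qed.

Lemma uniq_d p i i' : prime p -> p %| d i -> p %| d i' -> i = i'.
Proof.
wlog le : i i' / (i <= i')%N.
  move=> h pp pi pi'; case: (leqP i i') => [le|/ltnW le]; first exact: h.
  by apply/esym; apply: h.
move=> pp pi pi'; apply/eqP; apply/negPn/negP => ii'.
apply: (sqf_pp hA pp).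
apply: (dvdn_trans _ (dvdn_trans (hdiv i') (prod_sub_dvd _ _))).
apply: (dvdn_trans _ (@prod_two_dvd _ (fun j : 'I_k => (j <= i')%N) d i i' ii' le (leqnn _))).
exact: dvdn_mul.
Qed.

Lemma pos_spec p i : prime p -> p %| d i -> pos p = i.
Proof.
move=> pp pi; rewrite /pos; case: pickP => [i' /= pi'|/(_ i)/=]; last by rewrite pi.
by rewrite (uniq_d pp pi' pi).
Qed.

Lemma pos_dvd p (i : 'I_k) : pos p = i -> p %| d i.
Proof.
rewrite /pos; case: pickP => [i' /= pi' /val_inj <- //|_ h].
by have := ltn_ord i; rewrite -h ltnn.
Qed.

Lemma pos_own p j : prime p -> p %| a j -> j <= pos p.
Proof.
move=> pp pj; have := pos_le p; rewrite leq_eqVlt => /orP[/eqP->|lt]; first exact: ltnW.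
have := dvdn_trans (@pos_dvd p (Ordinal lt) erefl)
  (dvdn_trans (_ : d (Ordinal lt) %| _) (hdiv (Ordinal lt))).
have /[swap]/[apply] : d (Ordinal lt) %| \prod_(j0 < k | j0 <= Ordinal lt) d j0.
  by rewrite (bigD1 (Ordinal lt)) //=; exact: dvdn_mulr.
rewrite Euclid_dvd_prod // big_has_cond => /hasP[j' _ /andP[/= le pj']].
by rewrite (uniq_a pp pj pj').
Qed.

Lemma primes_d (i : 'I_k) : primes (d i) = seq.filter (fun p => pos p == i) (primes A).
Proof.
apply: (irr_sorted_eq ltn_trans ltnn (sorted_primes _)).
  by apply: sorted_filter; [exact: ltn_trans|exact: sorted_primes].
move=> q; rewrite mem_filter !mem_primes hd0 /=.
case: hA => A0 _; rewrite A0 /=.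
apply/andP/andP => [[pq qd]|[/eqP pqi /andP[pq qA]]].
  by rewrite pq (dvdn_trans qd (d_dvd i)) (pos_spec pq qd) eqxx.
by split => //; apply: pos_dvd.
Qed.

Lemma d_prod (i : 'I_k) : d i = \prod_(p <- primes A | pos p == i) p.
Proof.
by rewrite {1}(sqf_prod (sqf_dvd (d_dvd i) hA)) primes_d big_filter.
Qed.

Definition ee (j : 'I_k) := \prod_(p <- primes (a j) | pos p < z j.+1) p.

Lemma a_sqf j : sqf (a j).
Proof. exact: sqf_dvd (a_dvd j) hA. Qed.

Lemma ee_gt0 j : 0 < ee j.
Proof. by apply: prod_gt0s => p; rewrite mem_primes => /andP[/prime_gt0]. Qed.

Lemma ee_split j : a j = ee j * \prod_(p <- primes (a j) | ~~ (pos p < z j.+1)) p.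
Proof. by rewrite {1}(sqf_prod (a_sqf j)) (bigID (fun p => pos p < z j.+1)). Qed.

Lemma ee_dvd j : ee j %| a j.
Proof. by rewrite [X in _ %| X](ee_split j); exact: dvdn_mulr. Qed.

Lemma primes_ee j : primes (ee j) = seq.filter (fun p => pos p < z j.+1) (primes (a j)).
Proof. exact: primes_prod_filter. Qed.

Lemma primes_ae j : primes (a j %/ ee j) =
  seq.filter (fun p => ~~ (pos p < z j.+1)) (primes (a j)).
Proof. by rewrite {1}(ee_split j) mulKn ?ee_gt0 // primes_prod_filter. Qed.

Lemma d_recover (i : 'I_k) :
  \prod_(j < k) (\prod_(p <- primes (ee j) | pos p == i) p *
                 \prod_(p <- primes (a j %/ ee j) | pos p == i) p) = d i.
Proof.
rewrite d_prod -prod_split //; apply: eq_bigr => j _.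
rewrite primes_ee primes_ae !big_filter_cond [RHS](bigID (fun p => pos p < z j.+1)) /=.
by congr (_ * _); apply: eq_bigl => p; rewrite andbC.
Qed.

End Witness.


Section Gen.
Variables (k : nat) (a : 'I_k -> nat) (z : nat -> nat).
Hypothesis hA : sqf (\prod_(i < k) a i).
Hypothesis hz0 : z 0 = 0.
Hypothesis hzk : z k.+1 = k.
Hypothesis hzmono : forall i : nat, i <= k -> z i <= z i.+1.

Lemma zmono m1 m2 : m1 <= m2 -> m2 <= k.+1 -> z m1 <= z m2.
Proof.
move=> le; elim: m2 le => [|m2 IH]; first by rewrite leqn0 => /eqP->.
rewrite leq_eqVlt => /orP[/eqP->//|lt] le2.
exact: leq_trans (IH lt (ltnW le2)) (hzmono (le2 : m2 < k.+1)).
Qed.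

Lemma z_le_k m : m <= k.+1 -> z m <= k.
Proof. by move=> h; rewrite -hzk; apply: zmono. Qed.

Definition blk (i : nat) : nat := \sum_(1 <= m < k.+1) (z m <= i).

Lemma blk_ge j i : j < k -> z j.+1 <= i -> j.+1 <= blk i.
Proof.
move=> jk zi; rewrite /blk (big_cat_nat (n := j.+2)) //=.
apply: leq_trans (leq_addr _ _).
rewrite (eq_big_nat _ _ (F2 := fun=> 1)); first by rewrite sum_nat_const_nat muln1 subn1.
move=> m /andP[m1 mj]; rewrite (leq_trans (zmono _ _) zi) //.
by apply: leq_trans jk.
Qed.

Lemma blk_eq M i : M <= k -> z M <= i -> i < z M.+1 -> blk i = M.
Proof.
move=> Mk zi iz.
case: M Mk zi iz => [|M] Mk zi iz.
  rewrite /blk big1_seq // => m /=; rewrite mem_index_iota => /andP[m1 mk].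
  suff: ~~ (z m <= i) by move/negbTE->.
  by rewrite -ltnNge; exact: leq_trans iz (zmono m1 (ltnW mk)).
rewrite /blk (big_cat_nat (n := M.+2)) //=.
rewrite (eq_big_nat _ _ (F2 := fun=> 1)); last first.
  move=> m /andP[m1 mj]; rewrite (leq_trans (zmono _ _) zi) //.
  by apply: leq_trans Mk.
rewrite sum_nat_const_nat muln1 subn1 /= big1_seq ?addn0 // => m /=.
rewrite mem_index_iota => /andP[m1 mk].
suff: ~~ (z m <= i) by move/negbTE->.
by rewrite -ltnNge; exact: leq_trans iz (zmono m1 (ltnW mk)).
Qed.

Definition XE (e : 'I_k -> nat) := {j : 'I_k & seq_sub (primes (e j))}.
Definition XT (e : 'I_k -> nat) := {j : 'I_k & seq_sub (primes (a j %/ e j))}.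

Definition cprod e (s : XE e -> nat) (i : nat) :=
  \prod_(x : XE e | s x == i) ssval (tagged x).
Definition rprod e (t : XT e -> nat) (i : nat) :=
  \prod_(y : XT e | t y == i) ssval (tagged y).

Lemma cprod_val e (g : nat -> nat) i :
  cprod (fun x : XE e => g (ssval (tagged x))) i =
  \prod_(j < k) \prod_(p <- primes (e j) | g p == i) p.
Proof.
transitivity (\prod_(j < k) \prod_(y : seq_sub (primes (e j)) | g (ssval y) == i) ssval y).
  by rewrite (@sig_big_dep _ _ _ 'I_k (fun j => seq_sub (primes (e j))) xpredT
   (fun j y => g (ssval y) == i) (fun j y => ssval y)) /=.
by apply: eq_bigr => j _; rewrite (big_seq_sub_nat (fun p => g p == i) id) ?primes_uniq.
Qed.

Lemma rprod_val e (g : nat -> nat) i :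
  rprod (fun x : XT e => g (ssval (tagged x))) i =
  \prod_(j < k) \prod_(p <- primes (a j %/ e j) | g p == i) p.
Proof.
transitivity (\prod_(j < k) \prod_(y : seq_sub (primes (a j %/ e j)) | g (ssval y) == i) ssval y).
  by rewrite (@sig_big_dep _ _ _ 'I_k (fun j => seq_sub (primes (a j %/ e j))) xpredT
   (fun j y => g (ssval y) == i) (fun j y => ssval y)) /=.
by apply: eq_bigr => j _; rewrite (big_seq_sub_nat (fun p => g p == i) id) ?primes_uniq.
Qed.

Lemma prod_seq_sub_gt0 (s : seq nat) (Q : pred (seq_sub s)) :
  all prime s -> 0 < \prod_(y : seq_sub s | Q y) ssval y.
Proof.
move=> ps; apply: prod_gt0s => y _ _; apply: prime_gt0; exact: (allP ps) (ssvalP y).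
Qed.

Lemma all_prime_primes n : all prime (primes n).
Proof. by apply/allP => p; rewrite mem_primes => /andP[]. Qed.

Lemma cprod_gt0 e s i : 0 < cprod (e := e) s i.
Proof.
apply: prod_gt0s => x _ _; apply: prime_gt0.
exact: (allP (all_prime_primes _)) (ssvalP (tagged x)).
Qed.

Lemma rprod_gt0 e t i : 0 < rprod (e := e) t i.
Proof.
apply: prod_gt0s => x _ _; apply: prime_gt0.
exact: (allP (all_prime_primes _)) (ssvalP (tagged x)).
Qed.

Lemma dvd_prod_prod (I : finType) (P : pred I) (G H : I -> nat) :
  (forall j, P j -> G j %| H j) -> \prod_(j | P j) G j %| \prod_(j | P j) H j.
Proof.
move=> h; elim/big_rec2: _ => // j x y Pj xy; exact: dvdn_mul (h j Pj) xy.
Qed.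

Lemma rprod_dvd e (t : XT e -> nat) (i : nat) :
  (forall j, e j %| a j) -> (forall y : XT e, z (tag y).+1 <= t y) ->
  rprod t i %| \prod_(j < k | j < blk i) a j.
Proof.
move=> ea ht; rewrite /rprod.
pose T_ := fun j => seq_sub (primes (a j %/ e j)).
have -> : \prod_(y : XT e | t y == i) ssval (tagged y) =
  \prod_(j < k) \prod_(y : T_ j | t (Tagged T_ y) == i) ssval y.
  rewrite (@sig_big_dep _ _ _ 'I_k T_ xpredT (fun j y => t (Tagged T_ y) == i)
    (fun j y => ssval y)) /=.
  by apply: eq_bigl => -[j y].
rewrite (bigID (fun j : 'I_k => j < blk i)) /= [X in _ * X]big1 ?muln1; last first.
  move=> j /negP jb; apply: big1 => y /eqP ty; exfalso; apply: jb.
  by apply: blk_ge => //; rewrite -ty; exact: (ht (Tagged T_ y)).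
apply: dvd_prod_prod => j _.
apply: dvdn_trans (prod_sub_dvd _ _) _.
have aj : sqf (a j) by apply: sqf_dvd hA; rewrite (bigD1 j) //=; exact: dvdn_mulr.
have sq : sqf (a j %/ e j) by apply: sqf_dvd aj; rewrite -{2}(divnK (ea j)); exact: dvdn_mulr.
rewrite (_ : \prod_(y : seq_sub _) ssval y = \prod_(p <- primes (a j %/ e j)) p).
  by rewrite -sqf_prod // -{2}(divnK (ea j)); exact: dvdn_mulr.
by rewrite -(big_seq_sub_nat xpredT id (primes_uniq _)).
Qed.

End Gen.


Section Meas.
Local Open Scope classical_set_scope.
Local Open Scope ring_scope.
Variable R : realType.
Local Notation leb := (@lebesgue_measure R).

Lemma iter_ge0 n (f : seq R -> \bar R) : (forall x, (0 <= f x)%E) -> (0 <= iter_leb n f)%E.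
Proof.
elim: n f => [|n IH] f f0 /=; first exact: f0.
by apply: integral_ge0 => x _; apply: IH.
Qed.

Lemma le_int_nm (f g : R -> \bar R) : (forall x, (0 <= f x)%E) -> (forall x, (f x <= g x)%E) ->
  (\int[leb]_x f x <= \int[leb]_x g x)%E.
Proof.
move=> f0 fg; have g0 x : (0 <= g x)%E by apply: le_trans (fg x).
rewrite !ge0_integralTE //; apply: ereal_sup_le => _ [h hf <-]; exists h => //.
by move=> x; apply: le_trans (hf x) (fg x).
Qed.

Lemma iter_le n (f g : seq R -> \bar R) : (forall x, (0 <= f x)%E) -> (forall x, (f x <= g x)%E) ->
  (iter_leb n f <= iter_leb n g)%E.
Proof.
elim: n f g => [|n IH] f g f0 fg /=; first exact: fg.
apply: le_int_nm => x; first by apply: iter_ge0.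
by apply: IH.
Qed.

Definition ind (l r y : R) : R := \1_([set` `[l, r[%R] : set R) y.

Lemma ind_ge0 l r y : 0 <= ind l r y.
Proof. by rewrite /ind indicE. Qed.

Lemma ind1 l r y : l <= y -> y < r -> ind l r y = 1.
Proof. by move=> ly yr; rewrite /ind indicE mem_set //= in_itv /= ly yr. Qed.

Lemma int_ind (w l r : R) : 0 <= w -> l <= r ->
  (\int[leb]_x (w * ind l r x)%:E = (w * (r - l))%:E)%E.
Proof.
move=> w0 lr; under eq_integral do rewrite EFinM.
rewrite ge0_integralZl_EFin //; last 2 first.
- by move=> x _; rewrite lee_fin ind_ge0.
- by apply/measurable_realfun.measurable_EFinP; apply: measurable_realfun.measurable_indic.
rewrite integral_indic // setIT.
have := lebesgue_measure_itv `[l, r[%R; rewrite /= => ->.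
rewrite lte_fin; case: (ltP l r) => [_|rl]; first by rewrite -EFinB -EFinM.
have -> : r = l by apply/le_anti; rewrite rl lr.
by rewrite subrr mulr0 mule0.
Qed.

Lemma iter_box n (I : finType) (c : I -> R) (l r : I -> nat -> R) :
  (forall b, 0 <= c b) -> (forall b i, l b i <= r b i) ->
  iter_leb n (fun x => (\sum_b c b * \prod_(i < n) ind (l b i) (r b i) (nth 0 x i))%:E) =
  (\sum_b c b * \prod_(i < n) (r b i - l b i))%:E.
Proof.
elim: n c l r => [|n IH] c l r c0 lr /=.
  by congr (_%:E); apply: eq_bigr => b _; rewrite !big_ord0.
have h x : iter_leb n (fun t => (\sum_b c b * \prod_(i < n.+1) ind (l b i) (r b i) (nth 0 (x :: t) i))%:E) =
   (\sum_b (c b * \prod_(i < n) (r b i.+1 - l b i.+1)) * ind (l b 0) (r b 0) x)%:E.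
  rewrite -[RHS](_ : (\sum_b (c b * ind (l b 0) (r b 0) x) * \prod_(i < n) (r b i.+1 - l b i.+1))%:E = _); last first.
    by congr (_%:E); apply: eq_bigr => b _; rewrite mulrAC.
  rewrite -(IH (fun b => c b * ind (l b 0) (r b 0) x) (fun b i => l b i.+1) (fun b i => r b i.+1)); last 2 first.
  - by move=> b; rewrite mulr_ge0 ?ind_ge0.
  - by move=> b i; apply: lr.
  congr iter_leb; apply: funext => t; congr (_%:E); apply: eq_bigr => b _.
  by rewrite big_ord_recl /= mulrA.
transitivity (\int[leb]_x (\sum_b (c b * \prod_(i < n) (r b i.+1 - l b i.+1)) * ind (l b 0) (r b 0) x)%:E)%E.
  by apply: eq_integral => x _; exact: h.
under eq_integral => x _ do rewrite -sumEFin.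
rewrite (@ge0_integral_sum _ _ _ leb setT measurableT I
  (fun b x => ((c b * \prod_(i < n) (r b i.+1 - l b i.+1)) * ind (l b 0) (r b 0) x)%:E)); last 2 first.
- move=> b; apply/measurable_realfun.measurable_EFinP.
  by apply: measurable_realfun.measurable_funM => //; apply: measurable_realfun.measurable_indic.
- by move=> b x _; rewrite lee_fin mulr_ge0 ?ind_ge0 // mulr_ge0 // prodr_ge0 // => i _; rewrite subr_ge0.
rewrite -sumEFin; apply: eq_bigr => b _.
rewrite int_ind //; last by rewrite mulr_ge0 // prodr_ge0 // => i _; rewrite subr_ge0.
by rewrite big_ord_recl /= -mulrA [X in c b * X]mulrC.
Qed.

Definition isbox n (f : seq R -> R) (v : R) :=
  exists (I : finType) (c : I -> R) (l r : I -> nat -> R),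
    [/\ (forall b, 0 <= c b), (forall b i, l b i <= r b i),
       (forall x, f x = \sum_b c b * \prod_(i < n) ind (l b i) (r b i) (nth 0 x i)) &
       v = \sum_b c b * \prod_(i < n) (r b i - l b i)].

Lemma isbox_iter n f v : isbox n f v -> iter_leb n (fun x => (f x)%:E) = v%:E.
Proof.
move=> [I [c [l [r [c0 lr hf ->]]]]]; rewrite -iter_box //.
by congr iter_leb; apply: funext => x; rewrite hf.
Qed.

Lemma isbox_ge0 n f v : isbox n f v -> forall x, 0 <= f x.
Proof.
move=> [I [c [l [r [c0 lr hf _]]]]] x; rewrite hf sumr_ge0 // => b _.
by rewrite mulr_ge0 // prodr_ge0 // => i _; exact: ind_ge0.
Qed.

Lemma isbox0 n : isbox n (fun=> 0) 0.
Proof.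
exists void, (fun=> 0), (fun _ _ => 0), (fun _ _ => 0).
by split; [case|case|move=> x; rewrite big1 // => -[]|rewrite big1 // => -[]].
Qed.

Lemma isboxD n f g v w : isbox n f v -> isbox n g w -> isbox n (fun x => f x + g x) (v + w).
Proof.
move=> [I [c [l [r [c0 lr hf ->]]]]] [J [c' [l' [r' [c0' lr' hg ->]]]]].
exists (I + J)%type, (fun b => match b with inl b => c b | inr b => c' b end),
  (fun b => match b with inl b => l b | inr b => l' b end),
  (fun b => match b with inl b => r b | inr b => r' b end).
split.
- by case.
- by case.
- by move=> x; rewrite hf hg big_sumType.
- by rewrite big_sumType.
Qed.

Lemma isbox_seq n (J : Type) (s : seq J) (P : pred J) F V :
  (forall j, P j -> isbox n (F j) (V j)) ->
  isbox n (fun x => \sum_(j <- s | P j) F j x) (\sum_(j <- s | P j) V j).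
Proof.
move=> h; elim: s => [|j s IH].
  rewrite big_nil (_ : (fun x => _) = fun=> 0); first exact: isbox0.
  by apply: funext => x; rewrite big_nil.
rewrite big_cons; case Pj: (P j).
  have := isboxD (h j Pj) IH; congr isbox; apply: funext => x; by rewrite big_cons Pj.
by congr isbox: IH; apply: funext => x; rewrite big_cons Pj.
Qed.

Lemma isbox_sum n (J : finType) (P : pred J) F V :
  (forall j, P j -> isbox n (F j) (V j)) ->
  isbox n (fun x => \sum_(j | P j) F j x) (\sum_(j | P j) V j).
Proof. exact: isbox_seq. Qed.

Lemma isbox_box n (l r : nat -> R) : (forall i, l i <= r i) ->
  isbox n (fun x => \prod_(i < n) ind (l i) (r i) (nth 0 x i)) (\prod_(i < n) (r i - l i)).
Proof.
move=> lr; exists unit, (fun=> 1), (fun=> l), (fun=> r).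
by split => // [x|]; rewrite big_const card_unit /= ?addr0 mul1r.
Qed.

Lemma isbox_if n (b : bool) f g v w : isbox n f v -> isbox n g w ->
  isbox n (fun x => if b then f x else g x) (if b then v else w).
Proof. by case: b. Qed.

End Meas.

Unset Implicit Arguments.
Local Open Scope ring_scope.


Section Main.
Variables (R : realType) (k : nat) (z : nat -> nat) (a : 'I_k -> nat).
Hypothesis hz0 : z 0%N = 0%N.
Hypothesis hzk : z k.+1 = k.
Hypothesis hzmono : forall i : nat, (i <= k)%N -> (z i <= z i.+1)%N.
Hypothesis hzlow : forall i : nat, (1 <= i <= k)%N -> (i - 1 <= z i)%N.
Hypothesis hA : sqf (\prod_(i < k) a i).

Local Notation A := (\prod_(i < k) a i).
Local Notation ET := {ffun 'I_k -> 'I_A.+1}.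

Definition ev (e : ET) : 'I_k -> nat := fun j => e j.
Definition fs (e : ET) := family (fun x : XE (ev e) =>
  [pred i : 'I_k.+1 | (tag x <= i < z (tag x).+1)%N]).
Definition ft (e : ET) := family (fun y : XT a (ev e) =>
  [pred i : 'I_k.+1 | (z (tag y).+1 <= i)%N]).
Definition cc (e : ET) (s : {ffun XE (ev e) -> 'I_k.+1}) (i : nat) : nat :=
  cprod (fun x => nat_of_ord (s x)) i.
Definition rr (e : ET) (t : {ffun XT a (ev e) -> 'I_k.+1}) (i : nat) : nat :=
  rprod (fun y => nat_of_ord (t y)) i.
Definition Apre (m : nat) : nat := \prod_(j < k | (j < m)%N) a j.
Definition lo e s (i : nat) : R := ln ((cc e s i)%:R / 2).
Definition hi e s (i : nat) : R := lo e s i + ln (2 * (Apre (blk k z i))%:R).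
Definition Xv : R := \prod_(j < k.+1)
  ln (2 * (\prod_(i < k | (i < j)%N) a i)%:R : R) ^+ (z j.+1 - z j).
Definition Yv (e : ET) : R := ln (2 : R) ^+ k *
  \prod_(j < k) ((k%:R - (z j.+1)%:R + 1 : R) ^+ omega (a j %/ e j)).
Definition dd e s t i : nat := cc e s i * rr e t i.
Definition small e s t (x : seq R) : R :=
  \prod_(i < k) ind (ln ((dd e s t i)%:R / 2)) (ln (dd e s t i)%:R) (nth 0 x i).
Definition smallv e s t : R :=
  \prod_(i < k) (ln (dd e s t i)%:R - ln ((dd e s t i)%:R / 2)).
Definition bigf e s (x : seq R) : R := \prod_(i < k) ind (lo e s i) (hi e s i) (nth 0 x i).
Definition bigv e s : R := \prod_(i < k) (hi e s i - lo e s i).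
Definition gS e s x : R := if Xv < Yv e then bigf e s x else \sum_(t in ft e) small e s t x.
Definition vS e s : R := if Xv < Yv e then bigv e s else \sum_(t in ft e) smallv e s t.
Definition gE e x : R := \sum_(s in fs e) gS e s x.
Definition vE e : R := \sum_(s in fs e) vS e s.
Definition gg x : R := \sum_(e : ET | [forall j, (e j %| a j)%N]) gE e x.
Definition vv : R := \sum_(e : ET | [forall j, (e j %| a j)%N]) vE e.

Lemma cc_gt0 e s i : (0 < cc e s i)%N.
Proof. exact: cprod_gt0. Qed.
Lemma rr_gt0 e t i : (0 < rr e t i)%N.
Proof. exact: rprod_gt0. Qed.
Lemma dd_gt0 e s t i : (0 < dd e s t i)%N.
Proof. by rewrite muln_gt0 cc_gt0 rr_gt0. Qed.

Lemma Apre_gt0 m : (0 < Apre m)%N.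
Proof. by case: hA => A0 _; apply: prod_gt0s => j _ _; exact: dvdn_gt0 A0 (@a_dvd _ a j). Qed.

Lemma ln_half_le (n : nat) : (0 < n)%N -> ln (n%:R / 2 : R) <= ln n%:R.
Proof.
move=> n0; have np : (0 : R) < n%:R by rewrite ltr0n.
rewrite ler_ln ?posrE ?divr_gt0 //.
by rewrite ler_pdivrMr // ler_peMr // ?ler1n // ltW.
Qed.

Lemma isbox_gg : isbox k gg vv.
Proof.
apply: (isbox_sum (F := gE) (V := vE)) => e _.
apply: (isbox_sum (F := gS e) (V := vS e)) => s _.
apply: isbox_if.
  apply: (@isbox_box R k (lo e s) (hi e s)) => i; rewrite /hi lerDl ln_ge0 //.
  by rewrite -natrM ler1n muln_gt0 Apre_gt0.
apply: (isbox_sum (F := small e s) (V := smallv e s)) => t _.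
apply: (@isbox_box R k (fun i => ln ((dd e s t i)%:R / 2)) (fun i => ln (dd e s t i)%:R)) => i.
exact: ln_half_le (dd_gt0 _ _ _ _).
Qed.

Lemma sum_itv n lo hi :
  (\sum_(i < n) (if (lo <= i < hi)%N then 1 else 0))%N = (minn hi n - lo)%N.
Proof.
elim: n => [|n IH]; first by rewrite big_ord0; lia.
rewrite big_ord_recr /= IH.
case: (leqP lo n) => ln; case: (ltnP n hi) => nh /=; lia.
Qed.

Lemma card_itv n lo hi : (hi <= n)%N ->
  #|[pred i : 'I_n | (lo <= i < hi)%N]| = (hi - lo)%N.
Proof.
by move=> hn; rewrite -sum1_card big_mkcond /= sum_itv; congr (_ - _)%N; apply/minn_idPl.
Qed.

Lemma card_fam (X : finType) (F : X -> pred 'I_k.+1) :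
  #|family F| = (\prod_(x : X) #|F x|)%N.
Proof. by rewrite card_family foldrE big_map big_enum. Qed.

Lemma prod_tag (I : finType) (T_ : I -> finType) (G : I -> nat) :
  (\prod_(x : {i : I & T_ i}) G (tag x) = \prod_i G i ^ #|T_ i|)%N.
Proof.
transitivity (\prod_i \prod_(y : T_ i) G i)%N; last first.
  by apply: eq_bigr => i _; rewrite prod_nat_const.
by rewrite (@sig_big_dep _ _ _ I T_ xpredT (fun _ _ => true) (fun i _ => G i)).
Qed.

Lemma card_fs e : #|fs e| = (\prod_(j < k) (z j.+1 - j) ^ omega (e j))%N.
Proof.
rewrite card_fam (eq_bigr (fun x : XE (ev e) => z (tag x).+1 - tag x)%N); last first.
  move=> x _; rewrite card_itv //; apply: leqW; apply: (z_le_k hzk hzmono).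
  by rewrite ltnS ltnW.
rewrite (@prod_tag 'I_k (fun j => seq_sub (primes (ev e j))) (fun j : 'I_k => z j.+1 - j)%N).
by apply: eq_bigr => j _; rewrite card_seq_sub ?primes_uniq.
Qed.

Lemma card_ft e : #|ft e| = (\prod_(j < k) (k.+1 - z j.+1) ^ omega (a j %/ e j))%N.
Proof.
rewrite card_fam (eq_bigr (fun x : XT a (ev e) => k.+1 - z (tag x).+1)%N); last first.
  move=> x _; rewrite -(card_itv k.+1 (z (tag x).+1) k.+1 (leqnn _)).
  by apply: eq_card => i; rewrite !inE ltn_ord andbT.
rewrite (@prod_tag 'I_k (fun j => seq_sub (primes (a j %/ ev e j))) (fun j : 'I_k => k.+1 - z j.+1)%N).
by apply: eq_bigr => j _; rewrite card_seq_sub ?primes_uniq.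
Qed.

Lemma tele (F : nat -> R) n : (n <= k.+1)%N ->
  \prod_(0 <= i < z n) F (blk k z i) = \prod_(M < n) F M ^+ (z M.+1 - z M).
Proof.
elim: n => [|n IH] nk; first by rewrite hz0 big_ord0 big_geq.
rewrite big_ord_recr /= -IH; last exact: ltnW.
rewrite (big_cat_nat (n := z n)) //=; last exact: hzmono.
congr (_ * _); rewrite -prodr_const_nat; apply: eq_big_nat => i /andP[zi iz].
by rewrite (blk_eq hzmono _ zi iz).
Qed.

Lemma bigv_eq e s : bigv e s = Xv.
Proof.
rewrite /bigv /Xv -(tele (fun m => ln (2 * (Apre m)%:R))) // hzk big_mkord.
by apply: eq_bigr => i _; rewrite /hi addrC addKr.
Qed.

Lemma smallv_eq e s t : smallv e s t = ln 2 ^+ k.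
Proof.
rewrite /smallv (eq_bigr (fun=> ln 2)); last first.
  move=> i _; have d0 : (0 : R) < (dd e s t i)%:R by rewrite ltr0n dd_gt0.
  by rewrite ln_div ?posrE // opprB addrC subrK.
by rewrite prodr_const card_ord.
Qed.

Lemma vE_eq e : vE e = (\prod_(j < k) ((z j.+1)%:R - (j : nat)%:R : R) ^+ omega (e j)) *
      Num.min Xv (Yv e).
Proof.
rewrite /vE (eq_bigr (fun=> Num.min Xv (Yv e))); last first.
  move=> s _; rewrite /vS minElt bigv_eq; case: ifP => // _.
  rewrite (eq_bigr (fun=> ln 2 ^+ k)); last by move=> t _; exact: smallv_eq.
  rewrite sumr_const card_ft /Yv -[_ *+ _]mulr_natr natr_prod; congr (_ * _); apply: eq_bigr => j _.
  rewrite natrX natrB.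
    by rewrite -addn1 natrD addrAC.
  by apply: leqW; apply: (z_le_k hzk hzmono); exact: ltnW (ltn_ord j).
rewrite sumr_const card_fs -[_ *+ _]mulr_natl natr_prod; congr (_ * _); apply: eq_bigr => j _.
rewrite natrX natrB //.
by have := hzlow j.+1; rewrite ltn_ord subn1 /=; apply.
Qed.

Lemma le_sum_term (I : finType) (P : pred I) (F : I -> R) j :
  (forall i, P i -> 0 <= F i) -> P j -> F j <= \sum_(i | P i) F i.
Proof.
move=> F0 Pj; rewrite (bigD1 j) //= lerDl sumr_ge0 // => i /andP[Pi _]; exact: F0.
Qed.

Lemma small_ge0 e s t x : 0 <= small e s t x.
Proof. by rewrite prodr_ge0 // => i _; exact: ind_ge0. Qed.
Lemma gS_ge0 e s x : 0 <= gS e s x.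
Proof.
rewrite /gS; case: ifP => _; first by rewrite prodr_ge0 // => i _; exact: ind_ge0.
by rewrite sumr_ge0 // => t _; exact: small_ge0.
Qed.
Lemma gE_ge0 e x : 0 <= gE e x.
Proof. by rewrite sumr_ge0 // => s _; exact: gS_ge0. Qed.

Lemma point x : (\1_(Lset k a) x : R) <= gg x.
Proof.
rewrite indicE; case: (boolP (x \in Lset k a)) => [xin|_]; last first.
  by apply: (isbox_ge0 isbox_gg x).
move: xin; rewrite inE => -[d [hd0 [hdiv hb]]] /=.
have A0 : (0 < A)%N by case: hA.
pose e0 : ET := [ffun j => inord (ee a z d j)].
have e0E j : ev e0 j = ee a z d j.
  rewrite /ev ffunE inordK // ltnS.
  exact: (dvdn_leq A0 (dvdn_trans (ee_dvd z d hA j) (@a_dvd _ a j))).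
have Pe0 : [forall j, (e0 j %| a j)%N].
  by apply/forallP => j; have := e0E j; rewrite /ev => ->; exact: ee_dvd.
pose s0 : {ffun XE (ev e0) -> 'I_k.+1} := [ffun y => inord (pos d (ssval (tagged y)))].
pose t0 : {ffun XT a (ev e0) -> 'I_k.+1} := [ffun y => inord (pos d (ssval (tagged y)))].
have s0E y : nat_of_ord (s0 y) = pos d (ssval (tagged y)).
  by rewrite ffunE inordK // ltnS pos_le.
have t0E y : nat_of_ord (t0 y) = pos d (ssval (tagged y)).
  by rewrite ffunE inordK // ltnS pos_le.
have Hs : s0 \in fs e0.
  apply/familyP => y; rewrite inE s0E.
  have := ssvalP (tagged y); move: (ssval (tagged y)) => p.
  rewrite e0E primes_ee mem_filter => /andP[lt pa]; rewrite lt andbT.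
  move: pa; rewrite mem_primes => /and3P[pp _ pa]; exact: (@pos_own k a d hA hdiv p (tag y) pp pa).
have Ht : t0 \in ft e0.
  apply/familyP => y; rewrite inE t0E.
  have := ssvalP (tagged y); move: (ssval (tagged y)) => p.
  by rewrite e0E (primes_ae z d hA) mem_filter -leqNgt => /andP[].
have key (i : 'I_k) : dd e0 s0 t0 i = d i.
  rewrite /dd /cc /rr.
  rewrite (_ : (fun y => nat_of_ord (s0 y)) = fun y => pos d (ssval (tagged y))); last first.
    by apply: funext => y; exact: s0E.
  rewrite (_ : (fun y => nat_of_ord (t0 y)) = fun y => pos d (ssval (tagged y))); last first.
    by apply: funext => y; exact: t0E.
  rewrite cprod_val rprod_val -big_split /= -(d_recover z hA hd0 hdiv i).
  by apply: eq_bigr => j _; rewrite e0E.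
have tfam : forall y : XT a (ev e0), (z (tag y).+1 <= t0 y)%N.
  by move=> y; move/familyP: Ht => /(_ y); rewrite inE.
have ea j : (ev e0 j %| a j)%N by rewrite e0E; exact: ee_dvd.
have bnd (i : 'I_k) : (cc e0 s0 i <= d i <= cc e0 s0 i * Apre (blk k z i))%N.
  rewrite -(key i) /dd leq_mul2l leq_pmulr ?rr_gt0 //=.
  apply/orP; right; apply: dvdn_leq; first exact: Apre_gt0.
  exact: (rprod_dvd hA hzmono i ea tfam).
have d0 (i : 'I_k) : (0 < d i)%N by [].
rewrite /gg; apply: (le_trans _ (le_sum_term _ _ (fun e => gE e x) e0 (fun e _ => gE_ge0 e x) Pe0)).
rewrite /gE; apply: (le_trans _ (le_sum_term _ _ (fun s => gS e0 s x) s0 (fun s _ => gS_ge0 e0 s x) Hs)).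
rewrite /gS; case: ifP => _.
  rewrite /bigf big1 // => i _; have [h1 h2] := hb i; have /andP[b1 b2] := bnd i.
  have c0 : (0 : R) < (cc e0 s0 i)%:R by rewrite ltr0n cc_gt0.
  have dp : (0 : R) < (d i)%:R by rewrite ltr0n.
  apply: ind1.
    apply: le_trans h1; rewrite /lo ler_ln ?posrE ?divr_gt0 //.
    by rewrite ler_pM2r ?invr_gt0 // ler_nat.
  apply: (lt_le_trans h2); rewrite /hi /lo -lnM ?posrE ?divr_gt0 ?mulr_gt0 ?ltr0n ?Apre_gt0 ?cc_gt0 //.
  rewrite ler_ln ?posrE ?divr_gt0 ?mulr_gt0 ?ltr0n ?Apre_gt0 ?cc_gt0 //.
  rewrite mulrA mulfVK ?pnatr_eq0 // -natrM ler_nat //.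
apply: (le_trans _ (le_sum_term _ _ (fun t => small e0 s0 t x) t0 (fun t _ => small_ge0 e0 s0 t x) Ht)).
rewrite /small big1 // => i _; rewrite key; have [h1 h2] := hb i; exact: ind1.
Qed.

End Main.

Lemma sqf_of_squarefree n : squarefree n -> sqf n.
Proof.
move=> /andP[n0 /allP h]; split => // p.
case: (boolP (p \in primes n)) => [/h //|pn].
by rewrite -logn_gt0 lt0n negbK in pn; rewrite (eqP pn).
Qed.

Theorem lemma2p3 (R : realType) (k : nat) (z : nat -> nat) (a : 'I_k -> nat)
  (hz0 : z 0%N = 0%N) (hzk : z k.+1 = k)
  (hzmono : forall i : nat, (i <= k)%N -> (z i <= z i.+1)%N)
  (hzlow : forall i : nat, (1 <= i <= k)%N -> (i - 1 <= z i)%N)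
  (hsq : squarefree (\prod_(i < k) a i)) :
  (Lk k a <=
   (\sum_(d : {ffun 'I_k -> 'I_(\prod_(i < k) a i).+1} | [forall j, (d j %| a j)%N])
      (\prod_(j < k) ((z j.+1)%:R - (j : nat)%:R : R) ^+ omega (d j)) *
      Num.min
        (\prod_(j < k.+1)
           ln (2 * (\prod_(i < k | (i < j)%N) a i)%:R : R) ^+ (z j.+1 - z j))
        (ln (2 : R) ^+ k *
         \prod_(j < k) ((k%:R - (z j.+1)%:R + 1 : R) ^+ omega (a j %/ d j))))%:E)%E.
Proof.
have hA := sqf_of_squarefree _ hsq.
rewrite /Lk.
apply: (@le_trans _ _ (iter_leb k (fun x => (gg R k z a x)%:E))).
  apply: iter_le => x; first by rewrite lee_fin indicE ler0n.
  by rewrite lee_fin; apply: point.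
rewrite (isbox_iter (@isbox_gg R k z a hA)) lee_fin /vv le_eqVlt; apply/orP; left.
by apply/eqP; apply: eq_bigr => e _; exact: vE_eq.
Qed.
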